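(* Let $G=(V,E)$ be a finite simple graph. (i) If $x$ is a tree-like vertex of $G$ and $y\ne x$ is any vertex, then $x$ is a tree-like vertex of the graph obtained from $G$ by removing $y$ and its incident edges. (ii) If $Y\subseteq V$ is a set of tree-like vertices of $G$ and $G'$ is the induced subgraph of $G$ on $V\setminus Y$, then $\ell(G')=\ell(G)$.
   Context: A vertex $x$ of degree $d_x$ is tree-like if removing $x$ and its incident edges from $G$ increases the number of connected components by $d_x-1$. For a graph $H$, $\ell(H)=|E(H)|-|V(H)|+c(H)$, where $c(H)$ is the number of connected components of $H$. *)

(* Defs.v *)
From mathcomp Require Import all_boot all_order all_algebra.
Set Implicit Arguments. Unset Strict Implicit. Unset Printing Implicit Defensive.
Import GRing.Theory Num.Theory.
Local Open Scope ring_scope.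

(* A finite simple graph: vertex type T : finType, adjacency e : rel T assumed
   symmetric and irreflexive.  Subgraphs induced on a vertex set S : {set T}. *)
Section Graph.
Variables (T : finType) (e : rel T).

Definition adj_in (S : {set T}) : rel T :=
  fun x y => [&& x \in S, y \in S & e x y].

Definition edges_in (S : {set T}) : {set {set T}} :=
  [set E : {set T} | [exists x : T, exists y : T, (E == [set x; y]) && adj_in S x y]].

Definition comp_in (S : {set T}) (x : T) : {set T} :=
  [set y in S | connect (adj_in S) x y].

Definition ncomp_in (S : {set T}) : nat :=
  #|[set comp_in S x | x in S]|.

Definition deg_in (S : {set T}) (x : T) : nat :=
  #|[set y in S | adj_in S x y]|.

Definition treelike_in (S : {set T}) (x : T) : Prop :=
  x \in S /\
  (ncomp_in (S :\ x))%:Z = (ncomp_in S)%:Z + (deg_in S x)%:Z - 1.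

Definition ell_in (S : {set T}) : int :=
  (#|edges_in S|%N)%:Z - (#|S|%N)%:Z + (ncomp_in S)%:Z.

End Graph.

(* Main.v *)
Require Import Defs.
From mathcomp Require Import all_boot all_order all_algebra.
From mathcomp Require Import ring.
From mathcomp Require Import zify.
Import GRing.Theory.
Set Implicit Arguments. Unset Strict Implicit. Unset Printing Implicit Defensive.

Lemma intE3 (a b n : nat) : (b%:Z = a%:Z + n%:Z - 1)%R <-> (b + 1 = a + n)%N.
Proof.
split => h; first by apply/eqP; rewrite -eqz_nat PoszD h subrK.
by rewrite -PoszD -h PoszD addrK.
Qed.

Section Proof.
Variables (T : finType) (e : rel T).
Hypotheses (e_sym : symmetric e) (e_irr : irreflexive e).

Definition nbr (S : {set T}) x := [set y in S | adj_in e S x y].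

Lemma adj_sym (S : {set T}) : symmetric (adj_in e S).
Proof. move=> x y; rewrite /adj_in e_sym; by case: (x \in S); case: (y \in S). Qed.

Lemma csym (S : {set T}) : connect_sym (adj_in e S).
Proof. apply: sym_connect_sym; exact: adj_sym. Qed.

Lemma comp_self (S : {set T}) u : u \in S -> u \in comp_in e S u.
Proof. by move=> uS; rewrite inE uS connect0. Qed.

Lemma comp_eq (S : {set T}) u v : connect (adj_in e S) u v -> comp_in e S u = comp_in e S v.
Proof. move=> c; apply/setP=> y; by rewrite !inE (same_connect (csym S) c). Qed.

Lemma comp_mem (S : {set T}) u y : y \in comp_in e S u -> comp_in e S u = comp_in e S y.
Proof. by rewrite inE => /andP[_ c]; apply: comp_eq. Qed.

Lemma comp_sub (S : {set T}) u : comp_in e S u \subset S.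
Proof. by apply/subsetP=> y; rewrite inE => /andP[]. Qed.

Lemma connect_mono (S S' : {set T}) u v : S \subset S' ->
  connect (adj_in e S) u v -> connect (adj_in e S') u v.
Proof.
move=> sub; apply: connect_sub => a b /and3P[aS bS eab]; apply: connect1.
by rewrite /adj_in (subsetP sub a aS) (subsetP sub b bS) eab.
Qed.

Lemma closed_conn (R : rel T) (C : {set T}) u w :
  (forall a b, a \in C -> R a b -> b \in C) -> connect R u w -> u \in C -> w \in C.
Proof.
move=> cl /connectP[p pth ->] {w}; elim: p u pth => [|a p IH] u //= /andP[Rua pth] uC.
exact: IH pth (cl _ _ uC Rua).
Qed.

Lemma core (S : {set T}) x : x \in S ->
  (ncomp_in e S + #|[set comp_in e (S :\ x) u | u in nbr S x]| = ncomp_in e (S :\ x) + 1)%N.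
Proof.
move=> xS; set A := S :\ x; set N := nbr S x.
set K := [set comp_in e A u | u in N].
set Q := [set comp_in e A z | z in A].
have NA : N \subset A.
  apply/subsetP=> u; rewrite !inE /adj_in => /andP[uS /and3P[_ _ exu]].
  rewrite uS andbT; apply: contraTneq exu => ->; by rewrite e_irr.
have KQ : K \subset Q by apply: imsetS.
have AS : A \subset S := subD1set S x.
have L1 : forall z, z \in A -> comp_in e A z \notin K -> comp_in e S z = comp_in e A z.
  move=> z zA nK; apply/eqP; rewrite eqEsubset; apply/andP; split; last first.
    apply/subsetP=> y; rewrite inE => /andP[yA c].
    by rewrite inE (subsetP AS y yA) (connect_mono AS c).
  apply/subsetP=> y; rewrite inE => /andP[_ c].
  apply: (closed_conn _ c (comp_self zA)) => a b aC /and3P[aS bS eab].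
  have aA : a \in A := subsetP (comp_sub A z) a aC.
  case: (eqVneq b x) => [bx|bnx].
    subst b; exfalso; move/negP: nK; apply.
    apply/imsetP; exists a; last by rewrite (comp_mem aC).
    by rewrite inE aS /adj_in xS aS e_sym eab.
  have bA : b \in A by rewrite /A !inE bnx bS.
  move: aC; rewrite inE => /andP[_ c']; rewrite inE bA /=.
  apply: connect_trans c' (connect1 _).
  by rewrite /adj_in aA bA eab.
have eqP' : [set comp_in e S z | z in S] = comp_in e S x |: (Q :\: K).
  apply/eqP; rewrite eqEsubset; apply/andP; split; apply/subsetP=> C.
    case/imsetP=> z zS ->.
    case: (eqVneq z x) => [->|znx]; first by rewrite setU11.
    have zA : z \in A by rewrite /A !inE znx zS.
    case: (boolP (comp_in e A z \in K)) => [/imsetP[u uN ceq] | nK].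
      apply/setU1P; left; apply/esym/comp_eq.
      have cu : connect (adj_in e A) u z.
        have := comp_self zA; rewrite ceq inE => /andP[_ ->] //.
      apply: connect_trans (connect_mono AS cu).
      by apply: connect1; move: uN; rewrite inE => /andP[_ ->].
    rewrite (L1 z zA nK); apply/setU1P; right.
    by rewrite inE nK; apply/imsetP; exists z.
  case/setU1P=> [->|]; first by apply/imsetP; exists x.
  rewrite inE => /andP[nK /imsetP[z zA Cz]]; subst C.
  by apply/imsetP; exists z; [exact: subsetP AS z zA | rewrite (L1 z zA nK)].
have xnQ : comp_in e S x \notin Q :\: K.
  apply/negP; rewrite inE => /andP[_ /imsetP[z zA Cz]].
  have := comp_self xS; rewrite Cz => /(subsetP (comp_sub A z)).
  by rewrite /A !inE eqxx.
rewrite /ncomp_in eqP' cardsU1 xnQ -/Q -(cardsID K Q).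
have -> : Q :&: K = K by apply/setIidPr.
rewrite /=; lia.
Qed.


Lemma adj_mono (S S' : {set T}) a b : S \subset S' -> adj_in e S a b -> adj_in e S' a b.
Proof.
by move=> sub /and3P[aS bS eab]; rewrite /adj_in (subsetP sub a aS) (subsetP sub b bS) eab.
Qed.

Lemma nbr_notx (S : {set T}) x u : u \in nbr S x -> u != x.
Proof.
rewrite inE /adj_in => /andP[_ /and3P[_ _ exu]].
by apply: contraTneq exu => ->; rewrite e_irr.
Qed.

Lemma nbr_S (S : {set T}) x u : u \in nbr S x -> u \in S.
Proof. by rewrite inE => /andP[]. Qed.

Lemma nbr_mono (S S' : {set T}) x u : S \subset S' -> u \in nbr S x -> u \in nbr S' x.
Proof.
move=> sub; rewrite !inE => /andP[uS a]; by rewrite (subsetP sub u uS) (adj_mono sub a).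
Qed.

Lemma treelikeE (S : {set T}) x : x \in S ->
  treelike_in e S x <-> {in nbr S x &, injective (comp_in e (S :\ x))}.
Proof.
move=> xS; have := core xS; rewrite /treelike_in.
have hle := leq_imset_card (comp_in e (S :\ x)) (nbr S x).
have degE : deg_in e S x = #|nbr S x| by [].
rewrite degE => c.
split.
- case=> _ /intE3 h; apply/imset_injP; apply/eqP; apply: (@addnI (ncomp_in e S)).
  by rewrite c h.
- move=> inj; split=> //; apply/intE3; by rewrite -c (card_in_imset inj).
Qed.

Lemma tl_del (S : {set T}) x y : treelike_in e S x -> y \in S -> y != x ->
  treelike_in e (S :\ y) x.
Proof.
move=> tl yS ynx; have xS := tl.1.
have xS' : x \in S :\ y by rewrite !inE eq_sym ynx xS.
apply/(treelikeE xS'); have /(treelikeE xS) inj := tl.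
have sub1 : S :\ y \subset S := subD1set S y.
move=> u v uN vN ceq; apply: inj; try exact: nbr_mono sub1 _.
apply: comp_eq.
have vS : v \in (S :\ y) :\ x by rewrite in_setD1 (nbr_notx vN) (nbr_S vN).
have := comp_self vS; rewrite -ceq inE => /andP[_ c].
apply: connect_mono c; exact: setSD.
Qed.

Lemma edges_del (S : {set T}) x : x \in S ->
  #|edges_in e S| = (#|edges_in e (S :\ x)| + #|nbr S x|)%N.
Proof.
move=> xS.
have sub1 : S :\ x \subset S := subD1set S x.
have -> : edges_in e S = edges_in e (S :\ x) :|: [set [set x; y] | y in nbr S x].
  apply/eqP; rewrite eqEsubset; apply/andP; split; apply/subsetP=> E.
    rewrite inE => /existsP[a /existsP[b /andP[/eqP-> ab]]].
    case: (eqVneq a x) => [ax|anx].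
      subst a; apply/setUP; right; apply/imsetP; exists b => //.
      by rewrite inE ab; case/and3P: ab => _ ->.
    case: (eqVneq b x) => [bx|bnx].
      subst b; apply/setUP; right; apply/imsetP; exists a; last by rewrite setUC.
      by rewrite inE adj_sym ab; case/and3P: ab => ->.
    apply/setUP; left; rewrite inE; apply/existsP; exists a; apply/existsP; exists b.
    case/and3P: ab => aS bS eab.
    by rewrite eqxx /adj_in !inE anx bnx aS bS eab.
  case/setUP.
    rewrite inE => /existsP[a /existsP[b /andP[Ee ab]]].
    rewrite inE; apply/existsP; exists a; apply/existsP; exists b.
    by rewrite Ee (adj_mono sub1 ab).
  case/imsetP=> y yN ->; rewrite inE; apply/existsP; exists x; apply/existsP; exists y.
  by rewrite eqxx; move: yN; rewrite inE => /andP[].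
have dis : edges_in e (S :\ x) :&: [set [set x; y] | y in nbr S x] = set0.
  apply/eqP; rewrite -subset0; apply/subsetP=> E; rewrite inE => /andP[].
  rewrite inE => /existsP[a /existsP[b /andP[/eqP-> ab]]] /imsetP[y _ Ey].
  have : x \in [set a; b] by rewrite Ey setU11.
  case/and3P: ab; rewrite !inE => /andP[anx _] /andP[bnx _] _.
  by case/orP=> /eqP xe; [move: anx | move: bnx]; rewrite xe eqxx.
have inj : {in nbr S x &, injective (fun y => [set x; y])}.
  move=> u v uN vN Euv.
  have : u \in [set x; v] by rewrite -Euv !inE eqxx orbT.
  by rewrite !inE (negbTE (nbr_notx uN)) /= => /eqP.
have := cardsUI (edges_in e (S :\ x)) [set [set x; y] | y in nbr S x].
rewrite dis cards0 (card_in_imset inj); lia.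
Qed.

Lemma ell_del (S : {set T}) x : treelike_in e S x -> ell_in e (S :\ x) = ell_in e S.
Proof.
case=> xS h; rewrite /ell_in h (edges_del xS).
have := cardsD1 x S; rewrite xS => cS.
have degE : deg_in e S x = #|nbr S x| by [].
rewrite degE cS /= !PoszD; ring.
Qed.

Lemma ell_delY n : forall (Y S : {set T}), #|Y| = n -> Y \subset S ->
  (forall x, x \in Y -> treelike_in e S x) -> ell_in e (S :\: Y) = ell_in e S.
Proof.
elim: n => [|n IH] Y S cY sub tl.
  by move/eqP: cY; rewrite cards_eq0 => /eqP ->; rewrite setD0.
have [x xY] : exists x, x \in Y by apply/set0Pn; rewrite -card_gt0 cY.
have xS := subsetP sub x xY.
have -> : S :\: Y = (S :\ x) :\: (Y :\ x).
  apply/setP => z; rewrite !inE; case: (eqVneq z x) => [->|] /=; by rewrite ?xY.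
rewrite IH.
- exact: ell_del (tl x xY).
- by move: cY; rewrite (cardsD1 x Y) xY => -[].
- exact: setSD.
- move=> z; rewrite !inE => /andP[znx zY].
  by apply: tl_del; [exact: tl | exact: xS | rewrite eq_sym].
Qed.

Lemma main :
  (forall x y : T, treelike_in e [set: T] x -> y != x ->
      treelike_in e ([set: T] :\ y) x) /\
  (forall Y : {set T}, (forall x, x \in Y -> treelike_in e [set: T] x) ->
      ell_in e ([set: T] :\: Y) = ell_in e [set: T]).
Proof.
split.
  by move=> x y tl ynx; apply: tl_del tl (in_setT y) ynx.
by move=> Y tl; apply: (ell_delY erefl (subsetT Y) tl).
Qed.

End Proof.

Theorem proposition6p1 (T : finType) (e : rel T)
    (e_sym : symmetric e) (e_irr : irreflexive e) :
  (forall x y : T, treelike_in e [set: T] x -> y != x ->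
      treelike_in e ([set: T] :\ y) x) /\
  (forall Y : {set T}, (forall x, x \in Y -> treelike_in e [set: T] x) ->
      ell_in e ([set: T] :\: Y) = ell_in e [set: T]).
Proof. exact: (main e_sym e_irr). Qed.
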